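(* Let $n\ge1$, $f\in OSym_{n-1}$, $m\ge0$ and $1\le k\le n$. Then in the $ONH_n$-supermodule $OPol_n$, $$\tau_{k-1}\cdots\tau_1x_1^{m+k-1}\cdot\sigma_1(f)=\sum_{i=0}^{k-1}\sigma_i\big(h^{(k-i)}_{m+i}\big)\,\tau_i\cdots\tau_1\cdot\sigma_1(f),$$ where for $i=0$ the product $\tau_i\cdots\tau_1$ is interpreted as $1$.
   Context: $\Bbbk$ is a field of characteristic $\neq2$. $OPol_N$: graded superalgebra generated by odd degree-2 $x_1,\dots,x_N$ with $x_jx_i=-x_ix_j$ ($i\neq j$); $OPol_M\subseteq OPol_N$ for $M\le N$. $OSym_N\subseteq OPol_N$ is the subalgebra generated by $e^{(N)}_r:=\sum_{1\le i_1<\cdots<i_r\le N}x_{i_1}\cdots x_{i_r}$. $h^{(N)}_r:=\sum_{N\ge i_r\ge\cdots\ge i_1\ge1}x_{i_r}\cdots x_{i_1}$. $\sigma_i:OPol_{N}\to OPol_{N+i}$ is $x_j\mapsto x_{j+i}$. The odd nil-Hecke algebra $ONH_n$ is the graded superalgebra generated by odd elements $x_1,\dots,x_n$ (degree 2) and $\tau_1,\dots,\tau_{n-1}$ (degree $-2$) subject to: $x_ix_j=-x_jx_i$ ($i\ne j$); $\tau_i\tau_j=-\tau_j\tau_i$ ($|i-j|>1$); $x_i\tau_j=-\tau_jx_i$ ($i\ne j,j+1$); $\tau_j^2=0$; $\tau_j\tau_{j+1}\tau_j=-\tau_{j+1}\tau_j\tau_{j+1}$; $x_i\tau_i-\tau_ix_{i+1}=1=\tau_ix_i-x_{i+1}\tau_i$.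 It acts on $OPol_n$ with $x_i$ acting by left multiplication and $\tau_j$ acting by the odd Demazure operator $\partial_j$: the unique odd linear map with $\partial_j(x_i)=\delta_{i,j}-\delta_{i,j+1}$ and $\partial_j(fg)=\partial_j(f)g+({}^{s_j}f)\partial_j(g)$, where ${}^{s_j}$ is the superalgebra automorphism with $x_j\mapsto x_{j+1}$, $x_{j+1}\mapsto x_j$, $x_i\mapsto -x_i$ otherwise. *)

(* Defs.v *)
From HB Require Import structures.
From mathcomp Require Import all_boot all_order all_algebra.
From mathcomp Require Import mpoly.
Set Implicit Arguments. Unset Strict Implicit. Unset Printing Implicit Defensive.
Import Order.TTheory GRing.Theory Num.Theory.
Local Open Scope ring_scope.

(* OPol_n is modelled on the k-vector space {mpoly R[n]}: the monomial
   'X_[a] stands for the ordered product x_1^{a_1} x_2^{a_2} ... x_n^{a_n}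
   (variables are 0-based: paper's x_{j+1} is index j). *)

Section OPol.
Variables (R : fieldType) (n : nat).
Notation OP := {mpoly R[n]}.

(* sign exponent for x^a * x^b = (-1)^(osgn a b) x^(a+b):
   moving x_j^{b_j} left past x_i^{a_i} with j < i *)
Definition osgn (a b : 'X_{1..n}) : nat :=
  \sum_(i < n) \sum_(j < n | (j < i)%N) (a i * b j)%N.

Definition omul (p q : OP) : OP :=
  \sum_(a <- msupp p) \sum_(b <- msupp q)
     (((-1) ^+ osgn a b * p@_a * q@_b) *: 'X_[a + b]).

Definition opow (p : OP) (r : nat) : OP := iter r (omul p) 1.

(* the generator x_{j+1} (0-based index j); 0 if out of range *)
Definition ox (j : nat) : OP := if insub j is Some i then 'X_i else 0.

(* algebra map determined by images g l of the generators x_l,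
   applied to basis monomials written as ordered products *)
Definition oalgmap (g : nat -> OP) (p : OP) : OP :=
  \sum_(a <- msupp p) (p@_a *: \big[omul/1]_(l < n) opow (g l) (a l)).

Definition oshift (i : nat) (p : OP) : OP := oalgmap (fun l => ox (l + i)) p.

(* the superalgebra automorphism s_j (0-based j, paper's s_{j+1}):
   x_j <-> x_{j+1}, x_l |-> - x_l otherwise *)
Definition osref (j : nat) (p : OP) : OP :=
  oalgmap (fun l => if l == j then ox j.+1
                    else if l == j.+1 then ox j else - ox l) p.

Definition oe (N r : nat) : OP :=
  \sum_(t : r.-tuple 'I_n | sorted ltn (map val t) && all (fun i => i < N)%N (map val t))
     \big[omul/1]_(i <- t) 'X_i.

Definition oh (N r : nat) : OP :=
  \sum_(t : r.-tuple 'I_n | sorted leq (map val t) && all (fun i => i < N)%N (map val t))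
     \big[omul/1]_(i <- rev t) 'X_i.

(* OSym_N (viewed inside OPol_n): the subalgebra generated by the e^{(N)}_r *)
Inductive in_OSym (N : nat) : OP -> Prop :=
  | OSym_one : in_OSym N 1
  | OSym_e r : in_OSym N (oe N r)
  | OSym_add p q : in_OSym N p -> in_OSym N q -> in_OSym N (p + q)
  | OSym_scale (c : R) p : in_OSym N p -> in_OSym N (c *: p)
  | OSym_mul p q : in_OSym N p -> in_OSym N q -> in_OSym N (omul p q).

(* d j is the odd Demazure operator partial_{j+1} (0-based j, j + 1 < n):
   the odd linear map with partial(x_i) = delta_{i,j} - delta_{i,j+1} and
   partial(f g) = partial(f) g + (s_j f) partial(g). *)
Definition is_odd_demazure (d : nat -> OP -> OP) : Prop :=
  forall j, (j.+1 < n)%N ->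
    [/\ forall (c : R) (p q : OP), d j (c *: p + q) = c *: d j p + d j q,
        forall i, (i < n)%N -> d j (ox i) = (i == j)%:R - (i == j.+1)%:R
      & forall p q : OP, d j (omul p q) = omul (d j p) q + omul (osref j p) (d j q)].

Fixpoint otaus (d : nat -> OP -> OP) (i : nat) (p : OP) : OP :=
  if i is i'.+1 then d i' (otaus d i' p) else p.

End OPol.

(* Main.v *)
Require Import Defs.
From HB Require Import structures.
From mathcomp Require Import all_boot all_order all_algebra.
From mathcomp Require Import mpoly ssrcomplements.
From mathcomp Require Import zify ring.
Set Implicit Arguments. Unset Strict Implicit. Unset Printing Implicit Defensive.
Import Order.TTheory GRing.Theory Num.Theory.
Local Open Scope ring_scope.

Section Lin.
Variables (R : fieldType) (n : nat).
Notation OP := {mpoly R[n]}.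

Definition islin (D : OP -> OP) := forall (c : R) p q, D (c *: p + q) = c *: D p + D q.

Lemma islin0 D : islin D -> D 0 = 0.
Proof. move=> h; have := h 1 0 0; rewrite scale1r !addr0 scale1r => e.
by apply: (@addIr _ (D 0)); rewrite add0r -e. Qed.

Lemma islinD D : islin D -> forall p q, D (p + q) = D p + D q.
Proof. by move=> h p q; rewrite -[p + q]/(p + q) -{1}[p]scale1r h scale1r. Qed.

Lemma islinZ D : islin D -> forall c p, D (c *: p) = c *: D p.
Proof. by move=> h c p; rewrite -[c *: p]addr0 h islin0 // addr0. Qed.

Lemma islinN D : islin D -> forall p, D (- p) = - D p.
Proof. by move=> h p; rewrite -scaleN1r islinZ // scaleN1r. Qed.

Lemma islinB D : islin D -> forall p q, D (p - q) = D p - D q.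
Proof. by move=> h p q; rewrite islinD // islinN. Qed.

Lemma islin_sum D (I : Type) (s : seq I) (P : pred I) (F : I -> OP) : islin D ->
  D (\sum_(i <- s | P i) F i) = \sum_(i <- s | P i) D (F i).
Proof.
move=> h; elim/big_rec2: _ => [|i x y _ <-]; first exact: islin0.
by rewrite islinD.
Qed.

Definition lin (G : 'X_{1..n} -> OP) (p : OP) := \sum_(a <- msupp p) p@_a *: G a.

Lemma linEw G p k : (msize p <= k)%N ->
  lin G p = \sum_(a : 'X_{1..n < k}) p@_a *: G a.
Proof.
move=> le_pk; pose I : subFinType _ := 'X_{1..n < k}.
rewrite /lin (big_mksub I) ?msupp_uniq //=; first last.
  by move=> x /msize_mdeg_lt /leq_trans; apply.
rewrite big_rmcond //= => j /memN_msupp_eq0 ->.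
by rewrite scale0r.
Qed.

Lemma lin_islin G : islin (lin G).
Proof.
move=> c p q; pose k := (msize p + msize q + msize (c *: p + q))%N.
rewrite !(linEw G (k := k)) ?/k; try lia.
rewrite scaler_sumr -big_split /=; apply: eq_bigr => a _.
by rewrite mcoeffD mcoeffZ scalerDl scalerA.
Qed.

Lemma linX G a : lin G 'X_[a] = G a.
Proof. by rewrite /lin msuppX big_seq1 mcoeffX eqxx scale1r. Qed.

Lemma lin_id p : lin (fun a => 'X_[a]) p = p.
Proof. by rewrite /lin -mpolyE. Qed.

Lemma lin_ext D1 D2 : islin D1 -> islin D2 ->
  (forall a, D1 'X_[a] = D2 'X_[a]) -> forall p, D1 p = D2 p.
Proof.
move=> h1 h2 e p; rewrite -(lin_id p) /lin !islin_sum //.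
by apply: eq_bigr => a _; rewrite !islinZ // e.
Qed.

End Lin.

Section Omul.
Variables (R : fieldType) (n : nat).
Notation OP := {mpoly R[n]}.
Implicit Types (p q r : OP) (a b c : 'X_{1..n}).

Lemma osgnDl a b c : osgn (a + b) c = (osgn a c + osgn b c)%N.
Proof.
rewrite /osgn -big_split; apply: eq_bigr => i _; rewrite -big_split.
by apply: eq_bigr => j _; rewrite mnmDE mulnDl.
Qed.

Lemma osgnDr a b c : osgn a (b + c) = (osgn a b + osgn a c)%N.
Proof.
rewrite /osgn -big_split; apply: eq_bigr => i _; rewrite -big_split.
by apply: eq_bigr => j _; rewrite mnmDE mulnDr.
Qed.

Lemma osgn0l b : osgn 0 b = 0%N.
Proof. by rewrite /osgn big1 // => i _; rewrite big1 // => j _; rewrite mnm0E. Qed.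

Lemma osgn0r a : osgn a 0 = 0%N.
Proof. by rewrite /osgn big1 // => i _; rewrite big1 // => j _; rewrite mnm0E muln0. Qed.

Definition sgX a b : OP := (-1) ^+ osgn a b *: 'X_[a + b].

Lemma lin_pw (G G1 G2 : 'X_{1..n} -> OP) (c : R) p :
  (forall a, G a = c *: G1 a + G2 a) -> lin G p = c *: lin G1 p + lin G2 p.
Proof.
move=> e; rewrite /lin scaler_sumr -big_split /=; apply: eq_bigr => a _.
by rewrite e scalerDr !scalerA mulrC.
Qed.

Lemma omulE p q : omul p q = lin (fun a => lin (fun b => sgX a b) q) p.
Proof.
rewrite /omul /lin; apply: eq_bigr => a _; rewrite scaler_sumr.
apply: eq_bigr => b _; rewrite /sgX !scalerA; congr (_ *: _).
by ring.
Qed.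

Lemma omul_islinl q : islin (fun p => omul p q).
Proof. by move=> c p1 p2; rewrite !omulE lin_islin. Qed.

Lemma omul_islinr p : islin (fun q => omul p q).
Proof.
move=> c q1 q2; rewrite !omulE; apply: lin_pw => a; exact: lin_islin.
Qed.

Lemma omulXX a b : omul 'X_[a] 'X_[b] = sgX a b.
Proof. by rewrite omulE !linX. Qed.

Lemma omul1p p : omul 1 p = p.
Proof.
rewrite -mpolyX0; apply: (lin_ext (D1 := fun p => omul 'X_[0] p) (D2 := id))
  => [c x y|c x y|b] //=; first by rewrite omul_islinr.
by rewrite omulXX /sgX osgn0l expr0 scale1r add0m.
Qed.

Lemma omulp1 p : omul p 1 = p.
Proof.
rewrite -mpolyX0; apply: (lin_ext (D1 := fun p => omul p 'X_[0]) (D2 := id))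
  => [c x y|c x y|b] //=; first by rewrite omul_islinl.
by rewrite omulXX /sgX osgn0r expr0 scale1r addm0.
Qed.

Lemma omulA : associative (@omul R n).
Proof.
move=> p q r; apply: (lin_ext (D1 := fun p => omul p (omul q r))
   (D2 := fun p => omul (omul p q) r)) => [c x y|c x y|a] /=.
- by rewrite omul_islinl.
- by rewrite !omul_islinl.
apply: (lin_ext (D1 := fun q => omul 'X_[a] (omul q r))
   (D2 := fun q => omul (omul 'X_[a] q) r)) => [c x y|c x y|b] /=.
- by rewrite omul_islinl omul_islinr.
- by rewrite omul_islinr omul_islinl.
apply: (lin_ext (D1 := fun r => omul 'X_[a] (omul 'X_[b] r))
   (D2 := fun r => omul (omul 'X_[a] 'X_[b]) r)) => [c x y|c x y|e] /=.
- by rewrite !omul_islinr.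
- by rewrite omul_islinr.
rewrite !omulXX /sgX (islinZ (omul_islinr _)) (islinZ (omul_islinl _)) !omulXX /sgX.
rewrite !scalerA -!exprD addmA; congr (_ ^+ _ *: _).
by rewrite osgnDr osgnDl; lia.
Qed.

HB.instance Definition _ := Monoid.isLaw.Build OP 1 (@omul R n) omulA omul1p omulp1.

End Omul.

Section Gen.
Variables (R : fieldType) (n : nat).
Notation OP := {mpoly R[n]}.
Implicit Types (p q r : OP) (a b : 'X_{1..n}).
Local Notation xo := (ox R n).

Lemma omul0p p : omul 0 p = 0 :> OP.
Proof. exact: (islin0 (omul_islinl p)). Qed.
Lemma omulp0 p : omul p 0 = 0 :> OP.
Proof. exact: (islin0 (omul_islinr p)). Qed.
Lemma omulZl c p q : omul (c *: p) q = c *: omul p q :> OP.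
Proof. exact: (islinZ (omul_islinl q)). Qed.
Lemma omulZr c p q : omul p (c *: q) = c *: omul p q :> OP.
Proof. exact: (islinZ (omul_islinr p)). Qed.
Lemma omulDl p1 p2 q : omul (p1 + p2) q = omul p1 q + omul p2 q :> OP.
Proof. exact: (islinD (omul_islinl q)). Qed.
Lemma omulDr p q1 q2 : omul p (q1 + q2) = omul p q1 + omul p q2 :> OP.
Proof. exact: (islinD (omul_islinr p)). Qed.
Lemma omulNl p q : omul (- p) q = - omul p q :> OP.
Proof. exact: (islinN (omul_islinl q)). Qed.
Lemma omulNr p q : omul p (- q) = - omul p q :> OP.
Proof. exact: (islinN (omul_islinr p)). Qed.
Lemma omulBl p1 p2 q : omul (p1 - p2) q = omul p1 q - omul p2 q :> OP.
Proof. exact: (islinB (omul_islinl q)). Qed.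
Lemma omulBr p q1 q2 : omul p (q1 - q2) = omul p q1 - omul p q2 :> OP.
Proof. exact: (islinB (omul_islinr p)). Qed.
Lemma omul_sumr p (I : Type) (s : seq I) (P : pred I) (F : I -> OP) :
  omul p (\sum_(i <- s | P i) F i) = \sum_(i <- s | P i) omul p (F i).
Proof. exact: (islin_sum _ _ _ (omul_islinr p)). Qed.
Lemma omul_suml p (I : Type) (s : seq I) (P : pred I) (F : I -> OP) :
  omul (\sum_(i <- s | P i) F i) p = \sum_(i <- s | P i) omul (F i) p.
Proof. exact: (islin_sum _ _ _ (omul_islinl p)). Qed.

Lemma oxE (i : 'I_n) : xo i = 'X_i.
Proof. by rewrite /ox valK. Qed.

Lemma oxN l : (n <= l)%N -> xo l = 0.
Proof. by move=> h; rewrite /ox insubN // -leqNgt. Qed.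

Lemma osgnU (l : 'I_n) b : osgn U_(l) b = (\sum_(j < n | (j < l)%N) b j)%N.
Proof.
rewrite /osgn (bigD1 l) //= [X in (_ + X)%N]big1; last first.
  by move=> i hi; rewrite big1 // => j _; rewrite mnm1E eq_sym (negbTE hi).
by rewrite addn0; apply: eq_bigr => j _; rewrite mnm1E eqxx mul1n.
Qed.

Lemma omulXlX (l : 'I_n) a :
  omul 'X_l 'X_[a] = (-1) ^+ (\sum_(j < n | (j < l)%N) a j) *: 'X_[U_(l) + a] :> OP.
Proof. by rewrite omulXX /sgX osgnU. Qed.

Lemma osgnUU (u v : 'I_n) : osgn U_(u) U_(v) = (v < u)%N.
Proof.
rewrite osgnU; case: (ltnP v u) => h.
  rewrite (bigD1 v) //= mnm1E eqxx big1 // => j /andP[_ ne].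
  by rewrite mnm1E eq_sym (negbTE ne).
by rewrite big1 // => j hj; rewrite mnm1E; case: eqP => // e; move: hj; rewrite -e ltnNge h.
Qed.

Lemma ox_anti u v : u != v -> omul (xo u) (xo v) = - omul (xo v) (xo u).
Proof.
move=> ne; case: (ltnP u n) => hu; last by rewrite (oxN hu) omul0p omulp0 oppr0.
case: (ltnP v n) => hv; last by rewrite (oxN hv) omul0p omulp0 oppr0.
rewrite -[u]/(val (Ordinal hu)) -[v]/(val (Ordinal hv)) !oxE !omulXX /sgX !osgnUU.
rewrite addmC -scaleNr; congr (_ *: _) => /=.
case: (ltngtP u v) => h; rewrite ?expr0 ?expr1 ?opprK //.
by move: ne; rewrite h eqxx.
Qed.

Lemma ox_antiZ c1 c2 u v : u != v ->
  omul (c1 *: xo u) (c2 *: xo v) = - omul (c2 *: xo v) (c1 *: xo u).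
Proof. by move=> ne; rewrite !omulZl !omulZr ox_anti // !scalerN scalerA mulrC scalerA. Qed.

Lemma mono_dec a : a != 0%MM -> exists (l : 'I_n) (c : R) a',
  'X_[a] = c *: omul 'X_l 'X_[a'] /\ mdeg a = (mdeg a').+1.
Proof.
move=> nz; case: (pickP (fun l : 'I_n => (0 < a l)%N)) => [l hl|h]; last first.
  have e0 : a = 0%MM.
    apply/mnmP => i; rewrite mnm0E; have := h i; simpl.
    by case: (a i).
  by move: nz; rewrite e0 eqxx.
have e : a = (U_(l) + (a - U_(l)))%MM.
  apply/mnmP => i; rewrite mnmDE mnmBE mnm1E; case: eqP => [<-|]; last by rewrite add0n subn0.
  by rewrite add1n subn1 prednK.
exists l, ((-1) ^+ (\sum_(j < n | (j < l)%N) (a - U_(l))%MM j)), (a - U_(l))%MM; split.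
  by rewrite omulXlX scalerA -exprD -signr_odd oddD addbb expr0 scale1r -e.
by rewrite {1}e mdegD mdeg1.
Qed.

Lemma mono_ind (P : OP -> Prop) : P 1 -> (forall c p, P p -> P (c *: p)) ->
  (forall (l : 'I_n) p, P p -> P (omul 'X_l p)) -> forall a, P 'X_[a].
Proof.
move=> h1 hZ hX a; move: {2}(mdeg a) (erefl (mdeg a)) => k; elim: k a => [|k ih] a ea.
  by move: ea => /eqP; rewrite mdeg_eq0 => /eqP ->; rewrite mpolyX0.
have nz : a != 0%MM by rewrite -mdeg_eq0 ea.
have [l [c [a' [-> e]]]] := mono_dec nz.
by apply: hZ; apply: hX; apply: ih; move: e; rewrite ea => -[].
Qed.

Lemma zero_principle (D : OP -> OP) (w : 'I_n -> OP) : islin D -> D 1 = 0 ->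
  (forall (l : 'I_n) p, D (omul 'X_l p) = omul (w l) (D p)) -> forall p, D p = 0.
Proof.
move=> hl h1 hX; apply: (lin_ext (D1 := D) (D2 := fun _ => 0)) => // [c x y|].
  by rewrite scaler0 addr0.
move=> a /=; move: a; apply: (mono_ind (P := fun p => D p = 0)) => // [c p e|l p e]; first by rewrite islinZ // e scaler0.
by rewrite hX e omulp0.
Qed.

End Gen.

Section Alg.
Variables (R : fieldType) (n : nat).
Notation OP := {mpoly R[n]}.
Implicit Types (p q r : OP) (a b : 'X_{1..n}).
Local Notation xo := (ox R n).
Local Notation om := (@omul R n).
Variable g : nat -> OP.
Hypothesis ac : forall u v, (u < n)%N -> (v < n)%N -> u != v ->
  omul (g u) (g v) = - omul (g v) (g u).

Definition Mg a := \big[om/1]_(l < n) opow (g l) (a l).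

Lemma oalgmapE p : oalgmap g p = lin Mg p.
Proof. by []. Qed.

Lemma oalgmap_islin : islin (oalgmap g).
Proof. exact: lin_islin. Qed.

Lemma nthE b u (hu : (u < n)%N) : nth 0%N b u = b (Ordinal hu).
Proof. by rewrite (mnm_nth 0%N). Qed.

Lemma MgE a : Mg a = \big[om/1]_(0 <= u < n) opow (g u) (nth 0%N a u).
Proof. by rewrite big_mkord; apply: eq_bigr => u _; rewrite (mnm_nth 0%N). Qed.

Lemma opowS p k : opow p k.+1 = omul p (opow p k).
Proof. by []. Qed.

Lemma opow0 p : opow p 0 = 1.
Proof. by []. Qed.

Lemma move1 l u k : (l < n)%N -> (u < n)%N -> u != l ->
  omul (g l) (opow (g u) k) = (-1) ^+ k *: omul (opow (g u) k) (g l).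
Proof.
move=> hl hu ne; elim: k => [|k ih]; first by rewrite opow0 omulp1 omul1p expr0 scale1r.
rewrite opowS omulA (ac hl hu); last by rewrite eq_sym.
rewrite omulNl -omulA ih omulZr omulA.
by rewrite exprS mulN1r scaleNr -scalerN.
Qed.

Lemma move_range l (A : nat -> nat) k : (l < n)%N -> (k <= l)%N ->
  omul (g l) (\big[om/1]_(0 <= u < k) opow (g u) (A u)) =
  (-1) ^+ (\sum_(0 <= u < k) A u)%N *:
     omul (\big[om/1]_(0 <= u < k) opow (g u) (A u)) (g l).
Proof.
move=> hl; elim: k => [|k ih] hk.
  by rewrite !big_geq // omulp1 omul1p expr0 scale1r.
rewrite !big_nat_recr // omulA ih; last exact: ltnW.
rewrite omulZl -omulA move1 //; last first.
- by rewrite neq_ltn hk.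
- exact: leq_trans hk (ltnW hl).
by rewrite omulZr omulA scalerA -exprD.
Qed.

Lemma split_at (F : nat -> OP) l : (l < n)%N ->
  \big[om/1]_(0 <= u < n) F u =
  omul (\big[om/1]_(0 <= u < l) F u) (omul (F l) (\big[om/1]_(l.+1 <= u < n) F u)).
Proof.
move=> hl; rewrite (@big_cat_nat _ _ _ l 0 n) //; last exact: ltnW.
by rewrite (big_ltn hl).
Qed.

Lemma oalgmapX (l : 'I_n) a :
  oalgmap g (omul 'X_l 'X_[a]) = omul (g l) (oalgmap g 'X_[a]).
Proof.
rewrite omulXlX !oalgmapE (islinZ (@lin_islin _ _ _)) !linX !MgE.
rewrite !(split_at _ (ltn_ord l)).
have e1 : \big[om/1]_(0 <= u < l) opow (g u) (nth 0%N (U_(l) + a)%MM u) =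
          \big[om/1]_(0 <= u < l) opow (g u) (nth 0%N a u).
  apply: eq_big_nat => u /andP[_ hu]; have hun := ltn_trans hu (ltn_ord l).
  by rewrite !(nthE _ hun) mnmDE mnm1E; case: eqP => // /(congr1 val) /= e; exfalso; lia.
have e2 : \big[om/1]_(l.+1 <= u < n) opow (g u) (nth 0%N (U_(l) + a)%MM u) =
          \big[om/1]_(l.+1 <= u < n) opow (g u) (nth 0%N a u).
  apply: eq_big_nat => u /andP[hu hun].
  by rewrite !(nthE _ hun) mnmDE mnm1E; case: eqP => // /(congr1 val) /= e; exfalso; lia.
have e3 : opow (g l) (nth 0%N (U_(l) + a)%MM l) = omul (g l) (opow (g l) (nth 0%N a l)).
  have ol : Ordinal (ltn_ord l) = l by apply: val_inj.
  by rewrite !(nthE _ (ltn_ord l)) ol mnmDE mnm1E eqxx add1n opowS.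
rewrite e1 e2 e3 [RHS]omulA (@move_range l (nth 0%N a) l (ltn_ord l) (leqnn l)) omulZl.
have -> : (\sum_(j < n | (j < l)%N) a j)%N = (\sum_(0 <= u < l) nth 0%N a u)%N.
  rewrite (big_nat_widen _ _ _ _ _ (ltnW (ltn_ord l))) big_mkord.
  by apply: eq_bigr => j _; rewrite (mnm_nth 0%N).
by rewrite -!omulA.
Qed.

Lemma oalgmap_ox (l : nat) p : (l < n)%N ->
  oalgmap g (omul (xo l) p) = omul (g l) (oalgmap g p).
Proof.
move=> hl; rewrite -[l]/(val (Ordinal hl)) oxE.
apply: (lin_ext (D1 := fun p => oalgmap g (omul 'X_(Ordinal hl) p))
   (D2 := fun p => omul (g l) (oalgmap g p))) => [c x y|c x y|a] /=.
- by rewrite (omul_islinr _) oalgmap_islin.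
- by rewrite oalgmap_islin omul_islinr.
exact: oalgmapX.
Qed.

Lemma oalgmap1 : oalgmap g 1 = 1.
Proof.
rewrite -{1}mpolyX0 oalgmapE linX /Mg big1 // => l _.
by rewrite mnm0E.
Qed.

Lemma oalgmapM p q : oalgmap g (omul p q) = omul (oalgmap g p) (oalgmap g q).
Proof.
move: p; apply: (lin_ext (D1 := fun p => oalgmap g (omul p q))
   (D2 := fun p => omul (oalgmap g p) (oalgmap g q))) => [c x y|c x y|a] /=.
- by rewrite (omul_islinl _) oalgmap_islin.
- by rewrite oalgmap_islin omul_islinl.
move: a; apply: (mono_ind (P := fun p => oalgmap g (omul p q) = omul (oalgmap g p) (oalgmap g q))).
- by rewrite omul1p oalgmap1 omul1p.
- by move=> c p e; rewrite omulZl !(islinZ oalgmap_islin) e omulZl.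
by move=> l p e; rewrite -omulA -oxE !oalgmap_ox // e omulA.
Qed.

End Alg.

Section Inst.
Variables (R : fieldType) (n : nat).
Notation OP := {mpoly R[n]}.
Implicit Types (p q : OP) (a b : 'X_{1..n}).
Local Notation xo := (ox R n).
Local Notation om := (@omul R n).

Lemma shift_ac i u v : (u < n)%N -> (v < n)%N -> u != v ->
  om (xo (u + i)) (xo (v + i)) = - om (xo (v + i)) (xo (u + i)).
Proof. by move=> _ _ ne; apply: ox_anti; rewrite eqn_add2r. Qed.

Lemma oshift_islin i : islin (@oshift R n i).
Proof. exact: oalgmap_islin. Qed.

Lemma oshift1 i : oshift i (1 : OP) = 1.
Proof. exact: oalgmap1. Qed.

Lemma oshift_ox i l p : (l < n)%N -> oshift i (om (xo l) p) = om (xo (l + i)) (oshift i p).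
Proof. by move=> hl; apply: (oalgmap_ox (@shift_ac i)). Qed.

Lemma oshiftM i p q : oshift i (om p q) = om (oshift i p) (oshift i q).
Proof. exact: (oalgmapM (@shift_ac i)). Qed.

Definition spi (j v : nat) : nat := if v == j then j.+1 else if v == j.+1 then j else v.
Definition ssg (j v : nat) : R := if (v == j) || (v == j.+1) then 1 else -1.

Lemma sref_img j v : (if v == j then xo j.+1 else if v == j.+1 then xo j else - xo v)
   = ssg j v *: xo (spi j v).
Proof.
rewrite /ssg /spi; case: eqP => [_|_]; first by rewrite /= scale1r.
by case: eqP => _ /=; rewrite ?scale1r ?scaleN1r.
Qed.

Lemma spi_inv j v : spi j (spi j v) = v.
Proof.
rewrite /spi; case: (eqVneq v j) => [->|h1]; first by rewrite eqxx (gtn_eqF (ltnSn j)).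
case: (eqVneq v j.+1) => [->|h2]; first by rewrite eqxx.
by rewrite (negbTE h1) (negbTE h2).
Qed.

Lemma sref_ac j u v : (u < n)%N -> (v < n)%N -> u != v ->
  om (ssg j u *: xo (spi j u)) (ssg j v *: xo (spi j v)) =
  - om (ssg j v *: xo (spi j v)) (ssg j u *: xo (spi j u)).
Proof.
move=> _ _ ne; apply: ox_antiZ; apply: contra ne => /eqP e.
by rewrite -(spi_inv j u) e spi_inv.
Qed.

Lemma osrefE j p : osref j p = oalgmap (fun l => ssg j l *: xo (spi j l)) p.
Proof.
rewrite /osref /oalgmap; apply: eq_bigr => a _; congr (_ *: _).
by apply: eq_bigr => l _; rewrite sref_img.
Qed.

Lemma osref_islin j : islin (@osref R n j).
Proof. by move=> c p q; rewrite !osrefE oalgmap_islin. Qed.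

Lemma osref_ox j l p : (l < n)%N ->
  osref j (om (xo l) p) = om (ssg j l *: xo (spi j l)) (osref j p).
Proof. by move=> hl; rewrite !osrefE (oalgmap_ox (@sref_ac j)). Qed.

Lemma osref1 j : osref j (1 : OP) = 1.
Proof. by rewrite osrefE oalgmap1. Qed.

Lemma osref_x j l : (l < n)%N -> osref j (xo l) = ssg j l *: xo (spi j l).
Proof. by move=> hl; rewrite -[xo l]omulp1 osref_ox // osref1 omulp1. Qed.

Lemma osref_pow j r : (j.+1 < n)%N -> osref j (opow (xo j) r) = opow (xo j.+1) r.
Proof.
move=> hj; elim: r => [|r ih]; first exact: osref1.
rewrite !opowS osref_ox ?ih ?(ltnW hj) //.
by rewrite /ssg /spi eqxx /= scale1r.
Qed.

End Inst.

Section Facts.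
Variable (R : fieldType).
Definition cc (j v : nat) : R := (v == j)%:R - (v == j.+1)%:R.

Ltac decide_eqs := repeat (match goal with |- context [?x == ?y] =>
   (have ->: (x == y) = true by apply/eqP; lia) ||
   (have ->: (x == y) = false by apply/eqP; lia) end; simpl).
Ltac crush := rewrite /cc /ssg /spi;
  have [?|?|?] := ltngtP u i; have [?|?|?] := ltngtP u i.+1;
  have [?|?|?] := ltngtP u l; have [?|?|?] := ltngtP u l.+1;
  try (exfalso; lia); decide_eqs; rewrite /= ?orbF ?orbT; try ring; try lia.

Lemma F1 i l u : (i.+2 <= l)%N -> cc l u + ssg R i u * cc l (spi i u) = 0.
Proof. move=> h; crush. Qed.
Lemma F2 i l u : (i.+2 <= l)%N -> cc i u + ssg R l u * cc i (spi l u) = 0.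
Proof. move=> h; crush. Qed.
Lemma F3 i l u : (i.+2 <= l)%N -> spi i (spi l u) = spi l (spi i u).
Proof. move=> h; crush. Qed.
Lemma F4 i l u : (i.+2 <= l)%N -> ssg R l u * ssg R i (spi l u) = ssg R i u * ssg R l (spi i u).
Proof. move=> h; crush. Qed.
End Facts.

Lemma lin_comb (R : fieldType) (V : lmodType R) (A B X1 X2 : V) (a b c e f g h : R) :
  a + f = 0 -> b + e = 0 -> c = h -> g = h ->
  a *: A + (b *: B + c *: X1) + (e *: B + (f *: A + g *: X2)) = h *: X1 + h *: X2.
Proof.
move=> /eqP; rewrite addr_eq0 => /eqP -> /eqP; rewrite addr_eq0 => /eqP -> -> ->.
by rewrite !scaleNr -addrA addrACA addNr add0r addrCA addKr.
Qed.

Section Dem.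
Variables (R : fieldType) (n : nat).
Notation OP := {mpoly R[n]}.
Implicit Types (p q : OP).
Local Notation xo := (ox R n).
Local Notation om := (@omul R n).
Variable d : nat -> OP -> OP.
Hypothesis hd : is_odd_demazure d.

Lemma dlin j : (j.+1 < n)%N -> islin (d j).
Proof. by move=> hj; case: (hd hj). Qed.

Lemma dL j p q : (j.+1 < n)%N -> d j (om p q) = om (d j p) q + om (osref j p) (d j q).
Proof. by move=> hj; case: (hd hj). Qed.

Lemma d0 j : (j.+1 < n)%N -> d j 0 = 0.
Proof. by move=> hj; apply: islin0 (dlin hj). Qed.

Lemma d1 j : (j.+1 < n)%N -> d j 1 = 0.
Proof.
move=> hj; have := dL 1 1 hj; rewrite omul1p omulp1 osref1 omul1p => e.
by apply: (@addIr _ (d j 1)); rewrite add0r -e.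
Qed.

Lemma dX j v p : (j.+1 < n)%N -> (v < n)%N ->
  d j (om (xo v) p) = cc R j v *: p + om (ssg R j v *: xo (spi j v)) (d j p).
Proof.
move=> hj hv; rewrite dL // osref_x //; congr (_ + _).
case: (hd hj) => _ hx _; rewrite hx //.
have -> : ((v == j)%:R - (v == j.+1)%:R : OP) = cc R j v *: 1.
  by rewrite /cc scalerBl !scaler_nat.
by rewrite omulZl omul1p.
Qed.

Lemma spi_lt j v : (j.+1 < n)%N -> (v < n)%N -> (spi j v < n)%N.
Proof. rewrite /spi => hj hv; case: eqP => // _; case: eqP => // _; exact: ltnW. Qed.

Lemma dZX j c v p : (j.+1 < n)%N -> (v < n)%N ->
  d j (om (c *: xo v) p) = c *: (cc R j v *: p + om (ssg R j v *: xo (spi j v)) (d j p)).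
Proof. by move=> hj hv; rewrite omulZl (islinZ (dlin hj)) dX. Qed.

Lemma d_anti i l p : (i.+2 <= l)%N -> (l.+1 < n)%N -> d i (d l p) = - d l (d i p).
Proof.
move=> hil hl; have hi : (i.+1 < n)%N by lia.
suff: d i (d l p) + d l (d i p) = 0 by move/eqP; rewrite addr_eq0 => /eqP.
move: p; apply: (zero_principle (D := fun p => d i (d l p) + d l (d i p))
   (w := fun u => (ssg R l u * ssg R i (spi l u)) *: xo (spi i (spi l u)))).
- move=> c x y; rewrite (dlin hl) (dlin hi) (dlin hi) (dlin hl).
  by rewrite scalerDr addrACA.
- by rewrite !d1 // !d0 // addr0.
move=> u p; have hu := ltn_ord u; rewrite -oxE.
rewrite !dX // !(islinD (dlin _)) // !(islinZ (dlin _)) //.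
rewrite !dZX // ?spi_lt //.
rewrite !scalerDr !scalerA !omulZl !scalerA ?omulDr ?omulZl ?scalerDr -(F3 u hil).
apply: lin_comb.
- exact: (F1 R u hil).
- by rewrite addrC (F2 R u hil).
- by [].
- by rewrite (F4 R u hil).
Qed.

End Dem.

Section Sums.
Variables (R : fieldType) (n : nat).
Notation OP := {mpoly R[n]}.
Implicit Types (p q : OP).
Local Notation xo := (ox R n).
Local Notation om := (@omul R n).

Definition Uh (N r : nat) : OP :=
  \sum_(u : r.-tuple 'I_n | sorted (fun x y => y <= x)%N (map val u) &&
                            all (fun i => i < N)%N (map val u))
     \big[om/1]_(i <- u) 'X_i.

Lemma oh_Uh N r : oh R n N r = Uh N r.
Proof.
rewrite /oh /Uh (reindex_inj (h := fun u : r.-tuple 'I_n => [tuple of rev u])) /=; last first.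
  move=> u v e; apply: val_inj; rewrite -[val u]revK -[val v]revK.
  by move: (congr1 val e) => /= ->.
apply: eq_big => u; first by rewrite map_rev rev_sorted all_rev.
by rewrite revK.
Qed.

Lemma Uh_rec N r : Uh N r.+1 = \sum_(x : 'I_n | (x < N)%N) om 'X_x (Uh x.+1 r).
Proof.
rewrite /Uh (reindex (fun p : 'I_n * r.-tuple 'I_n => [tuple of p.1 :: p.2])) /=; last first.
  exists (fun t : r.+1.-tuple 'I_n => (thead t, [tuple of behead t])) => [[x t]|t] _ /=.
    by rewrite theadE; congr (_, _); apply: val_inj.
  by rewrite -tuple_eta.
symmetry; under eq_bigr => x _ do rewrite omul_sumr.
rewrite pair_big_dep /=; symmetry; apply: eq_big => [[x t]|[x t] _] /=; last by rewrite big_cons.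
rewrite (path_sortedE (leT := fun x y : nat => (y <= x)%N)); last first.
  by move=> a b c h1 h2; apply: leq_trans h2 h1.
case hx: (x < N)%N; last first.
  by rewrite andbF.
rewrite /= [all _ _ && sorted _ _]andbC -andbA; congr (_ && _).
rewrite -all_predI; apply: eq_all => i /=.
by case h: (i <= x)%N => //=; rewrite (leq_ltn_trans h hx).
Qed.

Lemma Uh0 N : Uh N 0 = 1.
Proof.
rewrite /Uh (eq_bigl (fun u => u == [tuple])) => [|u]; last by rewrite tuple0 eqxx.
by rewrite big_pred1_eq big_nil.
Qed.

Definition Ue (lo N r : nat) : OP :=
  \sum_(u : r.-tuple 'I_n | sorted ltn (map val u) &&
                            all (fun i => lo <= i < N)%N (map val u))
     \big[om/1]_(i <- u) 'X_i.

Lemma oe_Ue N r : oe R n N r = Ue 0 N r.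
Proof. by []. Qed.

Lemma Ue_rec lo N r : Ue lo N r.+1 = \sum_(x : 'I_n | (lo <= x < N)%N) om 'X_x (Ue x.+1 N r).
Proof.
rewrite /Ue (reindex (fun p : 'I_n * r.-tuple 'I_n => [tuple of p.1 :: p.2])) /=; last first.
  exists (fun t : r.+1.-tuple 'I_n => (thead t, [tuple of behead t])) => [[x t]|t] _ /=.
    by rewrite theadE; congr (_, _); apply: val_inj.
  by rewrite -tuple_eta.
symmetry; under eq_bigr => x _ do rewrite omul_sumr.
rewrite pair_big_dep /=; symmetry; apply: eq_big => [[x t]|[x t] _] /=; last by rewrite big_cons.
rewrite (path_sortedE (leT := ltn)); last exact: ltn_trans.
case hx: (lo <= x < N)%N; last first.
  by rewrite andbF.
rewrite /= [all _ _ && sorted _ _]andbC -andbA; congr (_ && _).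
rewrite -all_predI; apply: eq_all => i /=.
move/andP: hx => [hlo hN].
by case h: (x < i)%N => //=; rewrite (leq_trans hlo (ltnW h)).
Qed.

Lemma Ue0 lo N : Ue lo N 0 = 1.
Proof.
rewrite /Ue (eq_bigl (fun u => u == [tuple])) => [|u]; last by rewrite tuple0 eqxx.
by rewrite big_pred1_eq big_nil.
Qed.

End Sums.

Section Main.
Variables (R : fieldType) (n : nat).
Notation OP := {mpoly R[n]}.
Implicit Types (p q : OP).
Local Notation xo := (ox R n).
Local Notation om := (@omul R n).
Variable d : nat -> OP -> OP.
Hypothesis hd : is_odd_demazure d.

Definition G i N r : OP := oshift i (Uh R n N r).

Lemma G_rec i N r : G i N r.+1 = \sum_(x : 'I_n | (x < N)%N) om (xo (x + i)) (G i x.+1 r).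
Proof.
rewrite /G Uh_rec (islin_sum _ _ _ (@oshift_islin _ _ i)); apply: eq_bigr => x _.
by rewrite -oxE oshift_ox.
Qed.

Lemma G0 i N : G i N 0 = 1.
Proof. by rewrite /G Uh0 oshift1. Qed.

Lemma Gsplit i N r : (N < n)%N ->
  G i N.+1 r.+1 = om (xo (N + i)) (G i N.+1 r) + G i N r.+1.
Proof.
move=> hN; rewrite G_rec (bigD1 (Ordinal hN)) //=; congr (_ + _).
rewrite G_rec; apply: eq_bigl => x.
by rewrite -val_eqE /= ltnS ltn_neqAle andbC.
Qed.

Lemma G_empty i r : G i 0 r.+1 = 0.
Proof. by rewrite G_rec big_pred0. Qed.

Lemma G1 i r : (0 < n)%N -> G i 1 r = opow (xo i) r.
Proof.
move=> hn; elim: r => [|r ih]; first by rewrite G0.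
by rewrite Gsplit // G_empty addr0 ih add0n.
Qed.

Lemma cc0 j v : v != j -> v != j.+1 -> cc R j v = 0.
Proof. by move=> h1 h2; rewrite /cc (negbTE h1) (negbTE h2) subrr. Qed.
Lemma ccjj j : cc R j j = 1.
Proof. by rewrite /cc eqxx (ltn_eqF (ltnSn j)) subr0. Qed.
Lemma ccj1 j : cc R j j.+1 = -1.
Proof. by rewrite /cc eqxx (gtn_eqF (ltnSn j)) sub0r. Qed.
Lemma ssgjj j : ssg R j j = 1.
Proof. by rewrite /ssg eqxx. Qed.
Lemma ssgj1 j : ssg R j j.+1 = 1.
Proof. by rewrite /ssg eqxx orbT. Qed.
Lemma spijj j : spi j j = j.+1.
Proof. by rewrite /spi eqxx. Qed.
Lemma spij1 j : spi j j.+1 = j.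
Proof. by rewrite /spi eqxx (gtn_eqF (ltnSn j)). Qed.

Lemma D0 j i N r : (j.+1 < n)%N -> (i + N <= j)%N -> d j (G i N r) = 0.
Proof.
move=> hj; elim: r N => [|r ih] N h; first by rewrite G0 d1.
rewrite G_rec (islin_sum _ _ _ (dlin hd hj)) big1 // => x hx.
rewrite (dX hd) //; last by lia.
rewrite cc0; last by apply/eqP; lia.
  by rewrite scale0r add0r ih ?omulp0 //; lia.
by apply/eqP; lia.
Qed.

Lemma D1 i M r : ((i + M).+1 < n)%N -> d (i + M) (G i M.+1 r.+1) = G i M.+2 r.
Proof.
move=> h; have hM : (M < n)%N by lia.
have hM1 : (M.+1 < n)%N by lia.
elim: r => [|r ih].
  rewrite (Gsplit _ _ hM) (islinD (dlin hd h)) (dX hd) //; last by lia.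
  rewrite [(M + i)%N]addnC ccjj ssgjj spijj !scale1r G0 d1 // omulp0 addr0.
  by rewrite (D0 _ h) ?addr0 ?G0.
rewrite (Gsplit _ _ hM) (islinD (dlin hd h)) (dX hd) //; last by lia.
rewrite [(M + i)%N]addnC ccjj ssgjj spijj !scale1r ih (D0 _ h) // addr0.
by rewrite (Gsplit _ _ hM1) addrC addSn addnC.
Qed.

Definition S lo r : OP := oshift 1 (Ue R n lo n.-1 r).

Lemma S_rec lo r : S lo r.+1 =
  \sum_(x : 'I_n | (lo <= x < n.-1)%N) om (xo (x + 1)) (S x.+1 r).
Proof.
rewrite /S Ue_rec (islin_sum _ _ _ (@oshift_islin _ _ 1)); apply: eq_bigr => x _.
by rewrite -oxE oshift_ox.
Qed.

Lemma S0 lo : S lo 0 = 1.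
Proof. by rewrite /S Ue0 oshift1. Qed.

Lemma S_split j r : (j < n.-1)%N -> S j r.+1 = om (xo (j + 1)) (S j.+1 r) + S j.+1 r.+1.
Proof.
move=> hj; have hjn : (j < n)%N by lia.
rewrite S_rec (bigD1 (Ordinal hjn)) /=; last by rewrite leqnn hj.
congr (_ + _); rewrite S_rec; apply: eq_bigl => x.
rewrite -val_eqE /=; by apply/idP/idP; lia.
Qed.

Lemma K1 j lo r : (j.+1 < n)%N -> (j.+1 <= lo)%N -> d j (S lo r) = 0.
Proof.
move=> hj; elim: r lo => [|r ih] lo h; first by rewrite S0 d1.
rewrite S_rec (islin_sum _ _ _ (dlin hd hj)) big1 // => x /andP[hx1 hx2].
rewrite (dX hd) //; last by lia.
rewrite cc0; first by rewrite scale0r add0r ih ?omulp0 //; lia.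
- by apply/eqP; lia.
- by apply/eqP; lia.
Qed.

Lemma K2 j r : (j.+1 < n)%N -> d j (S j r.+1) = - S j.+1 r.
Proof.
move=> hj; have hjn : (j < n)%N by lia.
rewrite S_rec (islin_sum _ _ _ (dlin hd hj)) (bigD1 (Ordinal hjn)) /=; last by rewrite leqnn; lia.
rewrite big1 ?addr0.
  rewrite (dX hd) ?addn1 // ccj1 ssgj1 spij1 K1 // omulp0 addr0.
  by rewrite scaleN1r.
move=> x /andP[/andP[hx1 hx2] hx3]; move: hx3; rewrite -val_eqE /= => hx3.
rewrite (dX hd) //; last by lia.
rewrite cc0; first by rewrite scale0r add0r K1 ?omulp0 //; lia.
- by apply/eqP; lia.
- by apply/eqP; lia.
Qed.

Lemma K3 j lo r : (j.+1 < n)%N -> (lo.+1 <= j)%N -> d j (S lo r) = 0.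
Proof.
move=> hj; elim: r lo => [|r ih] lo h; first by rewrite S0 d1.
have hj1 : (j.-1 < n)%N by lia.
have hjn : (j < n)%N by lia.
rewrite S_rec (islin_sum _ _ _ (dlin hd hj)) (bigD1 (Ordinal hj1)) /=; last by apply/andP; split; lia.
rewrite (bigD1 (Ordinal hjn)) /=; last first.
  by rewrite -val_eqE /=; apply/andP; split; [apply/andP; split|apply/eqP]; lia.
rewrite big1 ?addr0; last first.
  move=> x /andP[/andP[/andP[hx1 hx2] hx3] hx4]; move: hx3 hx4.
  rewrite -!val_eqE /= => hx3 hx4.
  rewrite (dX hd) //; last by lia.
  rewrite cc0; first last.
  - by apply/eqP; lia.
  - by apply/eqP; lia.
  rewrite scale0r add0r.
  case: (leqP x.+2 j) => hxj.
    by rewrite ih ?omulp0.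
  by rewrite K1 ?omulp0 //; lia.
have e1 : (j.-1 + 1 = j)%N by lia.
have e2 : j.-1.+1 = j by lia.
rewrite e1 e2 addn1 (dX hd) // (dX hd) // ccjj ssgjj spijj ccj1 ssgj1 spij1.
rewrite (K1 (lo := j.+1)) // omulp0 addr0 !scale1r scaleN1r.
case: r ih => [|r] ih.
  by rewrite !S0 d1 // omulp0 addr0 subrr.
rewrite K2 // omulNr (S_split (j := j)); last by lia.
rewrite addn1.
by rewrite [om _ _ + _]addrC addrK subrr.
Qed.

Lemma killF f : in_OSym n.-1 f -> forall j, (1 <= j)%N -> (j.+1 < n)%N -> d j (oshift 1 f) = 0.
Proof.
elim => [|r|p q _ ihp _ ihq|c p _ ihp|p q _ ihp _ ihq] j hj hjn.
- by rewrite oshift1 d1.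
- by rewrite oe_Ue (K3 (lo := 0)) //.
- by rewrite (islinD (@oshift_islin _ _ 1)) (islinD (dlin hd hjn)) ihp // ihq // addr0.
- by rewrite (islinZ (@oshift_islin _ _ 1)) (islinZ (dlin hd hjn)) ihp // scaler0.
- by rewrite oshiftM (dL hd) // ihp // ihq // omul0p omulp0 addr0.
Qed.

Lemma killT F : (forall j, (1 <= j)%N -> (j.+1 < n)%N -> d j F = 0) ->
  forall i j, (i.+1 <= j)%N -> (j.+1 < n)%N -> d j (otaus d i F) = 0.
Proof.
move=> hF; elim => [|i ih] j hij hjn; first exact: hF.
have hi2 : (i.+2 <= j)%N by lia.
rewrite /= -[d j _]opprK -(d_anti hd _ hi2 hjn).
have -> : d j (otaus d i F) = 0 by apply: ih => //; lia.
by rewrite (d0 hd) ?oppr0 //; lia.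
Qed.

Lemma main_aux F : (forall j, (1 <= j)%N -> (j.+1 < n)%N -> d j F = 0) ->
  forall k, (k.+1 <= n)%N -> forall m,
  otaus d k (om (opow (xo 0) (m + k)) F) =
  \sum_(i < k.+1) om (G i (k.+1 - i) (m + i)) (otaus d i F).
Proof.
move=> hF; elim => [|k ih] hk m.
  by rewrite big_ord1 /= subn0 !addn0 G1.
have hkn : (k.+1 < n)%N by lia.
rewrite /= -addSnnS ih; last by lia.
rewrite (islin_sum _ _ _ (dlin hd hkn)).
rewrite (eq_bigr (fun i : 'I_k.+1 => om (d k (G i (k.+1 - i) (m.+1 + i))) (otaus d i F)
   + om (osref k (G i (k.+1 - i) (m.+1 + i))) (d k (otaus d i F)))); last first.
  by move=> i _; rewrite (dL hd).
rewrite big_split /= [in RHS]big_ord_recr /=; congr (_ + _).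
  apply: eq_bigr => i _; have hi := ltn_ord i.
  have -> : (k.+1 - i = (k - i).+1)%N by lia.
  have -> : (k.+2 - i = (k - i).+2)%N by lia.
  have hik : (i <= k)%N by lia.
  have hD := @D1 i (k - i) (m + i); rewrite (subnKC hik) in hD.
  by rewrite addSn hD //; lia.
rewrite big_ord_recr /= big1 ?add0r; last first.
  move=> i _; rewrite (killT hF) ?omulp0 //; exact: ltn_ord.
rewrite subSnn G1 ?osref_pow //; last by lia.
rewrite subSnn G1 ?addSnnS //; lia.
Qed.

Lemma G_oh i N r : G i N r = oshift i (oh R n N r).
Proof. by rewrite /G oh_Uh. Qed.

End Main.

Unset Implicit Arguments.

Theorem mainTheorem13 (R : fieldType) (hchar : (2%:R : R) != 0)
  (n : nat) (hn : (1 <= n)%N)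
  (d : nat -> {mpoly R[n]} -> {mpoly R[n]}) (hd : is_odd_demazure d)
  (f : {mpoly R[n]}) (hf : in_OSym n.-1 f)
  (m k : nat) (hk1 : (1 <= k)%N) (hkn : (k <= n)%N) :
  otaus d k.-1 (omul (opow (@ox R n 0) (m + k - 1)) (oshift 1 f))
  = \sum_(i < k) omul (oshift i (@oh R n (k - i) (m + i))) (otaus d i (oshift 1 f)).
Proof.
have hF := killF hd hf.
case: k hk1 hkn => [//|k] _ hkn.
have -> : (m + k.+1 - 1 = m + k)%N by lia.
rewrite /= (main_aux hd hF hkn).
by apply: eq_bigr => i _; rewrite G_oh.
Qed.
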